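(* Let $G=(V,D,B)$ be a mixed graph, $v\in V$, and $A\subseteq V\setminus(\{v\}\cup\mathrm{sib}(v))$. There exists a set $Y\subseteq A$ satisfying the half-trek criterion with respect to $v$ if and only if the maximum flow in the network $G_{\mathrm{flow}}(v,A)$ has size $|\mathrm{pa}(v)|$.
   Context: A mixed graph is $G=(V,D,B)$ with $V=[m]$, $D$ directed edges $v\to w$, $B$ symmetric bidirected edges $v\leftrightarrow w$, no self-loops. $\mathrm{pa}(v)=\{w:w\to v\in D\}$, $\mathrm{sib}(v)=\{w:w\leftrightarrow v\in B\}$. A half-trek from $y$ to $w$ is a path $y\leftrightarrow w_0\to w_1\to\cdots\to w_r=w$ (left side $\{y\}$, right side $\{w_0,\dots,w_r\}$) or $y\to w_1\to\cdots\to w_r=w$, $r\ge0$ (left side $\{y\}$, right side $\{y,w_1,\dots,w_r\}$); nodes may repeat. A system of half-treks from $X$ to $Y$: half-treks with distinct sources forming $X$ and distinct targets forming $Y$; no sided intersection: pairwise disjoint left sides and pairwise disjoint right sides. $Y$ satisfies the half-trek criterion w.r.t. $v$ if $|Y|=|\mathrm{pa}(v)|$, $Y\cap(\{v\}\cup\mathrm{sib}(v))=\emptyset$, and there is a system of half-treks with no sided intersection from $Y$ to $\mathrm{pa}(v)$. Flows: given a directed graph with source $s$, sink $t$, node capacities $c_V\ge0$ and edge capacities $c_D\ge0$, a flow is $f:\text{edges}\to\mathbb{R}_{\ge0}$ with $f(e)\le c_D(e)$ for all edges and, for every node $x\ne s,t$, $\sum_u f(u,x)=\sum_w f(x,w)\le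 c_V(x)$; its size is $|f|=\sum_w f(s,w)$. The network $G_{\mathrm{flow}}(v,A)$ has nodes $s,t$, a node $L(a)$ for each $a\in A$, and a node $R(w)$ for each $w\in V$; its edges are $s\to L(a)$ and $L(a)\to R(a)$ for each $a\in A$, $L(a)\to R(w)$ for each $a\in A$ and $w$ with $a\leftrightarrow w\in B$, $R(w)\to R(u)$ for each $w\to u\in D$, and $R(w)\to t$ for each $w\in\mathrm{pa}(v)$. All edges and the nodes $s,t$ have capacity $\infty$; all other nodes have capacity $1$. *)

(* Defs.v *)
From HB Require Import structures.
From mathcomp Require Import all_boot all_order all_algebra.
Set Implicit Arguments. Unset Strict Implicit. Unset Printing Implicit Defensive.
Import Order.TTheory GRing.Theory Num.Theory.

(*  D w u  <->  w -> u in D ;   B w u  <->  w <-> u in B               *)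

Definition mixed_graph (m : nat) (D B : rel 'I_m) : Prop :=
  (forall x, ~~ D x x) /\ (forall x, ~~ B x x) /\ (forall x y, B x y = B y x).

Definition pa m (D : rel 'I_m) (v : 'I_m) : {set 'I_m} := [set w | D w v].
Definition sib m (B : rel 'I_m) (v : 'I_m) : {set 'I_m} := [set w | B w v].

(* A half-trek is encoded as (source y, target w, bidirected-start flag b, p).
   - b = true : y <-> w0 -> w1 -> ... -> wr = w with p = [:: w0; ...; wr]
                (p non-empty); left side {y}, right side {w0,...,wr}.
   - b = false: y -> w1 -> ... -> wr = w with p = [:: w1; ...; wr]
                (r >= 0, p possibly empty); left side {y},
                right side {y, w1, ..., wr}. Nodes may repeat. *)
Definition halftrek (m : nat) : Type := ('I_m * 'I_m * bool * seq 'I_m)%type.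

Definition ht_source m (h : halftrek m) : 'I_m := h.1.1.1.
Definition ht_target m (h : halftrek m) : 'I_m := h.1.1.2.

Definition is_half_trek m (D B : rel 'I_m) (h : halftrek m) : bool :=
  let: (y, w, b, p) := h in
  if b then
    (if p is w0 :: p' then [&& B y w0, path D w0 p' & last w0 p' == w]
     else false)
  else path D y p && (last y p == w).

Definition ht_left m (h : halftrek m) : {set 'I_m} := [set ht_source h].

Definition ht_right m (h : halftrek m) : {set 'I_m} :=
  let: (y, w, b, p) := h in
  if b then [set x in p] else [set x in y :: p].

Definition ht_system_nsi m (D B : rel 'I_m) (X Y : {set 'I_m}) : Prop :=
  exists (k : nat) (h : 'I_k -> halftrek m),
    (forall i, is_half_trek D B (h i)) /\
    injective (fun i => ht_source (h i)) /\
    [set ht_source (h i) | i in 'I_k] = X /\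
    injective (fun i => ht_target (h i)) /\
    [set ht_target (h i) | i in 'I_k] = Y /\
    (forall i j, i != j -> [disjoint ht_left (h i) & ht_left (h j)]) /\
    (forall i j, i != j -> [disjoint ht_right (h i) & ht_right (h j)]).

Definition half_trek_criterion m (D B : rel 'I_m) (Y : {set 'I_m}) (v : 'I_m)
  : Prop :=
  [/\ #|Y| = #|pa D v|,
      Y :&: (v |: sib B v) = set0 &
      ht_system_nsi D B Y (pa D v)].

(* Capacities take values in option R, with None standing for infinity. *)
(* A flow is a function on (ordered) pairs of nodes; only its values on *)
(* edges (E x y) are relevant.                                          *)

Local Open Scope ring_scope.

Definition le_cap (R : realFieldType) (c : option R) (x : R) : bool :=
  if c is Some c' then x <= c' else true.

Definition inflow (R : realFieldType) (N : finType) (E : rel N)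
  (f : N -> N -> R) (x : N) : R := \sum_(u | E u x) f u x.
Definition outflow (R : realFieldType) (N : finType) (E : rel N)
  (f : N -> N -> R) (x : N) : R := \sum_(w | E x w) f x w.

Definition is_flow (R : realFieldType) (N : finType) (E : rel N) (s t : N)
  (cV : N -> option R) (cD : N -> N -> option R) (f : N -> N -> R) : Prop :=
  (forall x y, E x y -> 0 <= f x y /\ le_cap (cD x y) (f x y)) /\
  (forall x, x != s -> x != t ->
     inflow E f x = outflow E f x /\ le_cap (cV x) (inflow E f x)).

Definition flow_size (R : realFieldType) (N : finType) (E : rel N) (s : N)
  (f : N -> N -> R) : R := outflow E f s.

Definition max_flow_size_is (R : realFieldType) (N : finType) (E : rel N)
  (s t : N) (cV : N -> option R) (cD : N -> N -> option R) (k : R) : Prop :=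
  (exists f, is_flow E s t cV cD f /\ flow_size E s f = k) /\
  (forall f, is_flow E s t cV cD f -> flow_size E s f <= k).

Inductive fnode (m : nat) : Type :=
| Src | Snk | Lnode of 'I_m | Rnode of 'I_m.
Arguments Src {m}. Arguments Snk {m}.

Definition fnode_enc m (x : fnode m) : (bool + ('I_m + 'I_m))%type :=
  match x with
  | Src => inl true | Snk => inl false
  | Lnode a => inr (inl a) | Rnode w => inr (inr w)
  end.
Definition fnode_dec m (x : (bool + ('I_m + 'I_m))%type) : fnode m :=
  match x with
  | inl true => Src | inl false => Snk
  | inr (inl a) => Lnode a | inr (inr w) => Rnode w
  end.
Lemma fnode_encK m : cancel (@fnode_enc m) (@fnode_dec m).
Proof. by case. Qed.

HB.instance Definition _ m := Finite.copy (fnode m) (can_type (@fnode_encK m)).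

(* Nodes L(a) exist only for a in A: for a not in A, Lnode a is an
   isolated node (no incident edge), hence irrelevant. *)
Definition gflow_edge m (D B : rel 'I_m) (v : 'I_m) (A : {set 'I_m})
  : rel (fnode m) :=
  fun x y =>
    match x, y with
    | Src, Lnode a => a \in A
    | Lnode a, Rnode w => (a \in A) && ((w == a) || B a w)
    | Rnode w, Rnode u => D w u
    | Rnode w, Snk => D w v
    | _, _ => false
    end.

Definition gflow_cap_node (R : realFieldType) m (x : fnode m) : option R :=
  match x with Src | Snk => None | _ => Some 1 end.

Definition gflow_cap_edge (R : realFieldType) m (x y : fnode m) : option R :=
  None.

(* Main.v *)
Require Import Defs.
From HB Require Import structures.
From mathcomp Require Import all_boot all_order all_algebra.
From Stdlib Require Import Classical.
Import Order.TTheory GRing.Theory Num.Theory.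
Set Implicit Arguments. Unset Strict Implicit. Unset Printing Implicit Defensive.

Section Menger.
Variable T : finType.

Definition sepr (E : rel T) (X Y S : {set T}) :=
  forall a p, a \in X -> path E a p -> last a p \in Y ->
    exists2 u, u \in a :: p & u \in S.

Definition xywalks (E : rel T) (X Y : {set T}) k (P : 'I_k -> T * seq T) :=
 (forall i, [/\ (P i).1 \in X, path E (P i).1 (P i).2 & last (P i).1 (P i).2 \in Y]) /\
 (forall i j u, u \in (P i).1 :: (P i).2 -> u \in (P j).1 :: (P j).2 -> i = j).

Arguments xywalks : clear implicits.

Definition edel (E : rel T) (x y : T) : rel T :=
  fun u w => E u w && ((u, w) != (x, y)).

Lemma uses_edge (E : rel T) x y a p : path E a p -> ~~ path (edel E x y) a p ->
  x \in a :: p.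
Proof.
elim: p a => [|b p IH] a //= /andP[Eab Hp].
rewrite /edel negb_and Eab /=; case/orP.
  by rewrite negbK xpair_eqE => /andP[/eqP -> _]; rewrite inE eqxx.
by move/(IH _ Hp); rewrite !inE => ->; rewrite !orbT.
Qed.

Lemma path_edel1 (E : rel T) x y a p : path E a p ->
  (forall u, u \in belast a p -> u != x) -> path (edel E x y) a p.
Proof.
elim: p a => [|b p IH] a //= /andP[Eab Hp] Hu.
rewrite /edel Eab /= xpair_eqE negb_and (Hu a) ?inE ?eqxx //=.
by apply: IH => // u Hu'; apply: Hu; rewrite inE Hu' orbT.
Qed.

Lemma path_edel2 (E : rel T) x y a p : path E a p ->
  (forall u, u \in p -> u != y) -> path (edel E x y) a p.
Proof.
elim: p a => [|b p IH] a //= /andP[Eab Hp] Hu.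
rewrite /edel Eab /= xpair_eqE negb_and (Hu b) ?inE ?eqxx ?orbT //=.
by apply: IH => // u Hu'; apply: Hu; rewrite inE Hu' orbT.
Qed.

Lemma path_sub (E E' : rel T) a p : (forall u w, E' u w -> E u w) ->
  path E' a p -> path E a p.
Proof. by move=> H; apply: sub_path. Qed.

Lemma prefix_first (e : rel T) (Z : {set T}) a p : path e a p ->
  (exists2 u, u \in a :: p & u \in Z) ->
  exists p1, [/\ path e a p1, last a p1 \in Z,
     (forall u, u \in belast a p1 -> u \notin Z) & {subset a :: p1 <= a :: p}].
Proof.
elim: p a => [|b p IH] a /= Hp [u].
  rewrite inE => /eqP -> uZ; exists [::]; split => //.
case: (boolP (a \in Z)) => aZ.
  move=> _ _; exists [::]; split => //.
  by move=> w; rewrite mem_seq1 => /eqP ->; rewrite inE eqxx.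
rewrite inE; case/orP => [/eqP -> /(negP aZ)//|uin uZ].
case/andP: Hp => eab Hp.
have [p1 [P1 L1 B1 S1]] := IH b Hp (ex_intro2 _ _ u uin uZ).
exists (b :: p1); split => //=.
- by rewrite eab.
- move=> w; rewrite inE; case/orP => [/eqP ->|]; last exact: B1.
  done.
- move=> w; rewrite inE; case/orP => [/eqP ->|/S1 H]; first by rewrite inE eqxx.
  by rewrite inE H orbT.
Qed.

Lemma suffix_last (e : rel T) (Z : {set T}) b q : path e b q ->
  (exists2 u, u \in b :: q & u \in Z) ->
  exists b', exists q', [/\ b' \in Z, path e b' q', last b' q' = last b q,
     (forall u, u \in q' -> u \notin Z) & {subset b' :: q' <= b :: q}].
Proof.
elim: q b => [|c q IH] b /= Hp [u].
  rewrite inE => /eqP -> uZ; exists b, [::]; split => //.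
case/andP: Hp => ebc Hp.
case Hh: (has (fun w => w \in Z) (c :: q)).
  move=> _ _; case/hasP: Hh => w win wZ.
  have [b' [q' [B1 P1 L1 N1 S1]]] := IH c Hp (ex_intro2 _ _ w win wZ).
  exists b', q'; split => //.
  by move=> z /S1 H; rewrite inE H orbT.
move/hasPn: Hh => Hh; rewrite inE; case/orP => [/eqP -> bZ|uin uZ].
  exists b, (c :: q); split => //=; first by rewrite ebc.
by have := Hh u uin; rewrite /= uZ.
Qed.

Lemma suffix_at (e : rel T) z b q : path e b q -> z \in b :: q ->
  exists q2, [/\ path e z q2, last z q2 = last b q & {subset q2 <= q}].
Proof.
elim: q b => [|c q IH] b /= Hp.
  by rewrite inE => /eqP ->; exists [::].
case/andP: Hp => ebc Hp; rewrite inE; case/orP => [/eqP ->|zin].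
  by exists (c :: q); split => //=; rewrite ebc.
have [q2 [P2 L2 S2]] := IH c Hp zin.
by exists q2; split => // w /S2 H; rewrite inE H orbT.
Qed.

Lemma splice (e : rel T) a p b q z : path e a p -> path e b q ->
  z \in a :: p -> z \in b :: q ->
  exists r, [/\ path e a r, last a r = last b q &
   {subset a :: r <= [pred u | (u == z) || (u \in belast a p) || (u \in q)]}].
Proof.
move=> Hp Hq Hzp Hzq; have [q2 [P2 L2 S2]] := suffix_at Hq Hzq.
elim: p a Hp Hzp => [|c p IH] a /= Hp.
  rewrite inE => /eqP Hz; subst z; exists q2; split => // w.
  by rewrite inE; case/orP => [/eqP ->|/S2 H]; rewrite !inE ?eqxx ?H ?orbT.
case: (eqVneq z a) => [Hz _|Hz].
  subst z; exists q2; split => // w.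
  by rewrite inE; case/orP => [/eqP ->|/S2 H]; rewrite !inE ?eqxx ?H ?orbT.
rewrite inE (negPf Hz) /= => Hzc; case/andP: Hp => eac Hp.
have [r [Pr Lr Sr]] := IH c Hp Hzc.
exists (c :: r); split => //=; first by rewrite eac.
move=> w; rewrite inE; case/orP => [/eqP ->|/Sr].
  by rewrite !inE eqxx ?orbT.
rewrite !inE; case/orP => [/orP[->|->]|->]; by rewrite ?orbT.
Qed.


Lemma uses_edge_y (E : rel T) x y a p : path E a p -> ~~ path (edel E x y) a p ->
  y \in a :: p.
Proof.
elim: p a => [|b p IH] a //= /andP[Eab Hp].
rewrite /edel negb_and Eab /=; case/orP.
  by rewrite negbK xpair_eqE => /andP[_ /eqP ->]; rewrite !inE eqxx orbT.
by move/(IH _ Hp); rewrite !inE => ->; rewrite !orbT.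
Qed.

Definition eset (E : rel T) := [set e : T * T | E e.1 e.2].

Lemma menger0 (E : rel T) X Y k : (forall u w, ~~ E u w) ->
  (forall S, sepr E X Y S -> k <= #|S|) -> exists P, xywalks E X Y k P.
Proof.
move=> HE Hs.
have Hk : k <= #|X :&: Y|.
  apply: Hs => a [|b p] Xa /= Hp Ya; last by rewrite (negbTE (HE a b)) in Hp.
  by exists a; rewrite ?inE ?Xa ?Ya ?eqxx.
exists (fun i => (@enum_val _ (mem (X :&: Y)) (widen_ord Hk i), [::])); split.
  move=> i /=; have := enum_valP (widen_ord Hk i); rewrite inE => /andP[-> ->].
  by [].
move=> i j u /=; rewrite !mem_seq1 => /eqP -> /eqP /enum_val_inj H.
by apply/val_inj; move: H => /(congr1 val).
Qed.

Lemma in_last_only (Z : {set T}) a p u : u \in a :: p -> u \in Z ->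
  (forall w, w \in belast a p -> w \notin Z) -> u = last a p.
Proof.
rewrite lastI mem_rcons inE => /orP[/eqP -> //|ub] uZ H.
by move: (H u ub); rewrite uZ.
Qed.

Lemma menger_n n : forall (E : rel T) (X Y : {set T}) k, #|eset E| <= n ->
  (forall z, ~~ E z z) -> (forall S, sepr E X Y S -> k <= #|S|) ->
  exists P, xywalks E X Y k P.
Proof.
elim: n => [|n IH] E X Y k HE Hl Hs.
  apply: menger0 Hs => u w; apply/negP => Euw.
  move: HE; rewrite leqn0 cards_eq0 => /eqP He.
  have : (u, w) \in eset E by rewrite inE.
  by rewrite He inE.
case: (set_0Vmem (eset E)) => [H0|[[x y] Hxy]].
  apply: menger0 Hs => u w; apply/negP => Euw.
  have : (u, w) \in eset E by rewrite inE.
  by rewrite H0 inE.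
have Exy : E x y by move: Hxy; rewrite inE.
set E' := edel E x y.
have E'E : forall u w, E' u w -> E u w by move=> u w /andP[].
have HE' : #|eset E'| <= n.
  rewrite -ltnS; apply: leq_trans HE; apply: proper_card; apply/properP; split.
    by apply/subsetP => [[u w]]; rewrite !inE => /E'E.
  by exists (x, y) => //; rewrite inE /E' /edel /= eqxx andbF.
have Hl' : forall z, ~~ E' z z by move=> z; apply/negP => /E'E; apply/negP.
case: (classic (forall S, sepr E' X Y S -> k <= #|S|)) => [H|H].
  have [P [P1 P2]] := IH E' X Y k HE' Hl' H.
  exists P; split => // i; have [a b c] := P1 i; split => //.
  exact: sub_path b.
move/not_all_ex_not: H => [S HS].
have HS1 : sepr E' X Y S by apply: NNPP => H; apply: HS => /H.
have HSk : #|S| < k by rewrite ltnNge; apply/negP => H; apply: HS.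
pose Sx := x |: S; pose Sy := y |: S.
have sepSx : sepr E X Y Sx.
  move=> a p Xa Pp Yl; case: (boolP (path E' a p)) => H'.
    by have [u uin uS] := HS1 a p Xa H' Yl; exists u; rewrite // inE uS orbT.
  by exists x; [exact: uses_edge H' | rewrite setU11].
have sepSy : sepr E X Y Sy.
  move=> a p Xa Pp Yl; case: (boolP (path E' a p)) => H'.
    by have [u uin uS] := HS1 a p Xa H' Yl; exists u; rewrite // inE uS orbT.
  by exists y; [exact: uses_edge_y H' | rewrite setU11].
have xS : x \notin S.
  apply/negP => xS; have := Hs _ sepSx; rewrite /Sx cardsU1 xS /=.
  by rewrite leqNgt HSk.
have yS : y \notin S.
  apply/negP => yS; have := Hs _ sepSy; rewrite /Sy cardsU1 yS /=.
  by rewrite leqNgt HSk.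
have cSx : #|Sx| = k.
  apply/eqP; rewrite eqn_leq (Hs _ sepSx) andbT /Sx cardsU1 xS /=; exact: HSk.
have cSy : #|Sy| = k.
  apply/eqP; rewrite eqn_leq (Hs _ sepSy) andbT /Sy cardsU1 yS /=; exact: HSk.
have SSx : forall u, u \in S -> u \in Sx by move=> u uS; rewrite inE uS orbT.
have SSy : forall u, u \in S -> u \in Sy by move=> u uS; rewrite inE uS orbT.
have HA : forall Tt, sepr E' X Sx Tt -> k <= #|Tt|.
  move=> Tt HT; apply: Hs => a p Xa Pp Yl.
  have [u uin uSx] := sepSx a p Xa Pp Yl.
  have [p1 [P1 L1 B1 S1]] := prefix_first Pp (ex_intro2 _ _ u uin uSx).
  have P1' : path E' a p1.
    apply: (@path_edel1 E x y a p1 P1) => w /B1; apply: contra => /eqP ->; exact: setU11.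
  have [w win wT] := HT a p1 Xa P1' L1.
  by exists w => //; apply: S1.
have HB : forall Tt, sepr E' Sy Y Tt -> k <= #|Tt|.
  move=> Tt HT; apply: Hs => a p Xa Pp Yl.
  have [u uin uSy] := sepSy a p Xa Pp Yl.
  have [b1 [q1 [B1 P1 L1 N1 S1]]] := suffix_last Pp (ex_intro2 _ _ u uin uSy).
  have P1' : path E' b1 q1.
    apply: (@path_edel2 E x y b1 q1 P1) => w /N1; apply: contra => /eqP ->; exact: setU11.
  have L1' : last b1 q1 \in Y by rewrite L1.
  have [w win wT] := HT b1 q1 B1 P1' L1'.
  by exists w => //; apply: S1.
have [P [P1 P2]] := IH E' X Sx k HE' Hl' HA.
have [Q [Q1 Q2]] := IH E' Sy Y k HE' Hl' HB.
have : forall i, exists p1, [/\ path E' (P i).1 p1, last (P i).1 p1 \in Sx,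
     (forall u, u \in belast (P i).1 p1 -> u \notin Sx) &
     {subset (P i).1 :: p1 <= (P i).1 :: (P i).2}].
  move=> i; have [Pa Pp Pl] := P1 i; apply: prefix_first Pp _.
  by exists (last (P i).1 (P i).2) => //; exact: mem_last.
case/fin_all_exists => p1 Hp1.
have : forall i, exists bq, [/\ bq.1 \in Sy, path E' bq.1 bq.2,
     last bq.1 bq.2 \in Y, (forall u, u \in bq.2 -> u \notin Sy) &
     {subset bq.1 :: bq.2 <= (Q i).1 :: (Q i).2}].
  move=> i; have [Qa Qp Ql] := Q1 i.
  have [b1 [q1 [B1 P1' L1 N1 S1]]] := suffix_last Qp (ex_intro2 (fun u => u \in (Q i).1 :: (Q i).2) (fun u => u \in Sy) _ (mem_head _ _) Qa).
  by exists (b1, q1); split => //; rewrite L1.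
case/fin_all_exists => bq Hbq.
pose a i := (P i).1.
pose z i := last (a i) (p1 i).
pose b j := (bq j).1.
pose q j := (bq j).2.
pose g u := if u == x then y else u.
have zSx : forall i, z i \in Sx by move=> i; case: (Hp1 i).
have gSy : forall i, g (z i) \in Sy.
  move=> i; rewrite /g; case: (eqVneq (z i) x) => [_|zx]; first by rewrite /Sy setU11.
  have := zSx i; rewrite !inE (negbTE zx) /= => ->.
  by rewrite orbT.
have binj : injective b.
  move=> j1 j2 Hb; have [_ _ _ _ S1] := Hbq j1; have [_ _ _ _ S2] := Hbq j2.
  apply: (Q2 j1 j2 (b j1)); first by apply: S1; exact: mem_head.
  by rewrite Hb; apply: S2; exact: mem_head.
have bsurj : forall u, u \in Sy -> exists j, b j = u.
  move=> u uSy.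
  have : [set b j | j in 'I_k] == Sy.
    rewrite eqEcard cSy card_imset // card_ord leqnn andbT.
    by apply/subsetP => w /imsetP [j _ ->]; case: (Hbq j).
  move/eqP => Himg; move: uSy; rewrite -Himg => /imsetP [j _ ->].
  by exists j.
have : forall i, exists j, b j = g (z i) by move=> i; apply: bsurj.
case/fin_all_exists => sig Hsig.
have Pinj : forall i j u, u \in a i :: p1 i -> u \in a j :: p1 j -> i = j.
  move=> i j u Hi Hj; have [_ _ _ S1] := Hp1 i; have [_ _ _ S2] := Hp1 j.
  exact: (P2 i j u (S1 u Hi) (S2 u Hj)).
have Qinj : forall i j u, u \in b i :: q i -> u \in b j :: q j -> i = j.
  move=> i j u Hi Hj; have [_ _ _ _ S1] := Hbq i; have [_ _ _ _ S2] := Hbq j.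
  exact: (Q2 i j u (S1 u Hi) (S2 u Hj)).
have key : forall i j u, u \in a i :: p1 i -> u \in b j :: q j -> u \in S.
  move=> i j u Hu1 Hu2; apply/negPn/negP => uS.
  have [Pp _ B1 _] := Hp1 i; have [_ Qp Ql N1 _] := Hbq j.
  have [r [Pr Lr Sr]] := splice Pp Qp Hu1 Hu2.
  have Xa : a i \in X by case: (P1 i).
  have Lr' : last (a i) r \in Y by rewrite Lr.
  have [w win wS] := HS1 (a i) r Xa Pr Lr'.
  move: (Sr w win); rewrite !inE => /orP[/orP[/eqP wu | wb] | wq].
  - by move: wS; rewrite wu (negbTE uS).
  - by move: (B1 w wb); rewrite (SSx _ wS).
  - by move: (N1 w wq); rewrite (SSy _ wS).
have zP : forall i, z i \in a i :: p1 i by move=> i; exact: mem_last.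
have gz : forall i j, g (z i) = g (z j) -> i = j.
  move=> i j; rewrite /g.
  case: (eqVneq (z i) x) => zix; case: (eqVneq (z j) x) => zjx.
  - move=> _; apply: (Pinj i j x); [rewrite -{1}zix | rewrite -{1}zjx]; exact: zP.
  - move=> yz; have := zSx j; rewrite !inE (negbTE zjx) /= -yz.
    by rewrite (negbTE yS).
  - move=> yz; have := zSx i; rewrite !inE (negbTE zix) /= yz.
    by rewrite (negbTE yS).
  - by move=> zz; apply: (Pinj i j (z i)); [exact: zP | rewrite zz; exact: zP].
have PQ : forall i j u, u \in a i :: p1 i -> u \in b (sig j) :: q (sig j) -> i = j.
  move=> i j u Hu1 Hu2; have uS := key _ _ _ Hu1 Hu2.
  have [_ _ B1 _] := Hp1 i; have [_ _ _ N1 _] := Hbq (sig j).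
  have uz : u = z i := in_last_only Hu1 (SSx _ uS) B1.
  have ub : u = b (sig j).
    move: Hu2; rewrite inE => /orP[/eqP -> //|uq].
    by move: (N1 u uq); rewrite (SSy _ uS).
  apply: gz; rewrite -(Hsig j) -ub uz /g.
  case: (eqVneq (z i) x) => // zix.
  by move: uS; rewrite uz zix (negbTE xS).
pose rest i := if z i == x then b (sig i) :: q (sig i) else q (sig i).
have restP : forall i u, u \in a i :: (p1 i ++ rest i) ->
    u \in a i :: p1 i \/ u \in b (sig i) :: q (sig i).
  move=> i u; rewrite -cat_cons mem_cat => /orP[H|H]; first by left.
  right; move: H; rewrite /rest; case: ifP => // _ H.
  by rewrite inE H orbT.
exists (fun i => (a i, p1 i ++ rest i)); split.
  move=> i /=; have [Pp _ _ _] := Hp1 i; have [_ Qp Ql _ _] := Hbq (sig i).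
  have Xa : a i \in X by case: (P1 i).
  have Hs' := Hsig i; rewrite /g in Hs'.
  split => //.
    rewrite cat_path (sub_path E'E Pp) /= -/(z i) /rest.
    case: (eqVneq (z i) x) => zix /=.
      have QpE : path E (b (sig i)) (q (sig i)) := sub_path E'E Qp.
      rewrite Hs' zix eqxx in QpE *; apply/andP; split; [exact: Exy | exact: QpE].
    have QpE : path E (b (sig i)) (q (sig i)) := sub_path E'E Qp.
    by rewrite (negbTE zix) in Hs'; rewrite Hs' in QpE.
  rewrite last_cat -/(z i) /rest.
  case: (eqVneq (z i) x) => zix //=.
  by rewrite (negbTE zix) in Hs'; rewrite -Hs'.
move=> i j u /restP [H1|H1] /restP [H2|H2].
- exact: Pinj H1 H2.
- exact: PQ H1 H2.
- by apply/esym; apply: PQ H2 H1.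
- by apply: gz; rewrite -!Hsig (Qinj _ _ _ H1 H2).
Qed.

Lemma menger (E : rel T) X Y k : (forall z, ~~ E z z) ->
  (forall S, sepr E X Y S -> k <= #|S|) -> exists P, xywalks E X Y k P.
Proof. by move=> Hl Hs; apply: (menger_n (leqnn #|eset E|) Hl Hs). Qed.

End Menger.


Section Flow.
Local Open Scope ring_scope.
Variables (R : realFieldType) (N : finType) (E : rel N) (s t : N)
  (cV : N -> option R) (cD : N -> N -> option R).

Lemma flow_cut f (U S : {set N}) : is_flow E s t cV cD f ->
  (forall x, ~~ E x s) -> s \in U -> t \notin U ->
  (forall x y, x \in U -> y \notin U -> E x y -> y \in S) ->
  (forall y, y \in S -> [/\ y != s, y != t & cV y = Some 1]) ->
  flow_size E s f <= #|S|%:R.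
Proof.
move=> [Hf Hc] Hs sU tU Hcr HS.
pose F x y := if E x y then f x y else 0.
have F0 : forall x y, 0 <= F x y by move=> x y; rewrite /F; case: ifP => // /Hf [].
have outE : forall x, outflow E f x = \sum_y F x y by move=> x; exact: big_mkcond.
have inE' : forall x, inflow E f x = \sum_u F u x by move=> x; exact: big_mkcond.
have step1 : flow_size E s f = \sum_(x in U) (outflow E f x - inflow E f x).
  rewrite (bigD1 s) //= big1 ?addr0.
    rewrite [inflow _ _ _]big1 ?subr0 // => u Eu.
    by move: (Hs u); rewrite Eu.
  move=> x /andP[xU xs]; have xt : x != t by apply: contraNneq tU => <-.
  by have [-> _] := Hc x xs xt; rewrite subrr.
have Hout : \sum_(x in U) outflow E f x =
   \sum_(x in U) \sum_(y in U) F x y + \sum_(x in U) \sum_(y | y \notin U) F x y.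
  rewrite -big_split /=; apply: eq_bigr => x _; rewrite outE.
  by rewrite (bigID (fun y => y \in U)).
have Hin : \sum_(x in U) inflow E f x =
   \sum_(x in U) \sum_(y in U) F x y + \sum_(x in U) \sum_(u | u \notin U) F u x.
  rewrite [X in _ = X + _]exchange_big -big_split /=; apply: eq_bigr => x _.
  by rewrite inE' (bigID (fun y => y \in U)).
have step2 : flow_size E s f <= \sum_(x in U) \sum_(y | y \notin U) F x y.
  rewrite step1 sumrB Hout Hin opprD addrACA subrr add0r lerBlDr lerDl.
  by apply: sumr_ge0 => x _; apply: sumr_ge0 => y _.
apply: (le_trans step2).
apply: (@le_trans _ _ (\sum_(x in U) \sum_(y in S) F x y)).
  apply: ler_sum => x xU; rewrite [X in X <= _]big_mkcond [X in _ <= X]big_mkcond.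
  apply: ler_sum => y _ /=; case: ifP => yU; last by case: ifP.
  rewrite /F; case Exy: (E x y); last by case: ifP.
  by rewrite (Hcr x y xU yU Exy).
apply: (@le_trans _ _ (\sum_x \sum_(y in S) F x y)).
  rewrite [X in _ <= X](bigID (fun x => x \in U)) /= lerDl.
  by apply: sumr_ge0 => x _; apply: sumr_ge0 => y _.
rewrite exchange_big /= -sum1_card natr_sum.
apply: ler_sum => y yS; rewrite -inE'.
have [ys yt cy] := HS y yS; have [_ ] := Hc y ys yt; rewrite cy //=.
Qed.


Lemma sum_in (e : rel N) a r x : path e a r ->
  (\sum_(u | e u x) count (pred1 (u, x)) (zip (a :: r) r) = count (pred1 x) r)%N.
Proof.
elim: r a => [|b r IH] a /=; first by move=> _; rewrite big1.
case/andP => eab Hp; rewrite big_split /= IH //; congr (_ + _)%N.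
case: (eqVneq b x) => [<-|bx].
  rewrite (bigD1 a) //= eqxx big1 // => u /andP[_ ua].
  by rewrite xpair_eqE eq_sym (negbTE ua).
by rewrite big1 // => u _; rewrite xpair_eqE (negbTE bx) andbF.
Qed.

Lemma sum_out (e : rel N) a r x : path e a r ->
  (\sum_(w | e x w) count (pred1 (x, w)) (zip (a :: r) r) =
   count (pred1 x) (belast a r))%N.
Proof.
elim: r a => [|b r IH] a /=; first by move=> _; rewrite big1.
case/andP => eab Hp; rewrite big_split /= IH //; congr (_ + _)%N.
case: (eqVneq a x) => [<-|ax].
  rewrite (bigD1 b) //= eqxx big1 // => u /andP[_ ua].
  by rewrite xpair_eqE eqxx eq_sym (negbTE ua).
by rewrite big1 // => u _; rewrite xpair_eqE (negbTE ax).
Qed.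

Lemma flow_of_paths k (W : 'I_k -> seq N) :
  (forall i, path E s (W i ++ [:: t])) -> (forall i, s \notin W i) ->
  (forall i, t \notin W i) -> (forall i, uniq (W i)) ->
  (forall i j u, u \in W i -> u \in W j -> i = j) ->
  (forall x, x != s -> x != t -> cV x = Some 1) ->
  (forall x y, cD x y = None) ->
  exists f, is_flow E s t cV cD f /\ flow_size E s f = k%:R.
Proof.
move=> Hp Hs Ht Hu Hd HcV HcD.
pose cnt i x y := count (pred1 (x, y)) (zip (s :: W i ++ [:: t]) (W i ++ [:: t])).
pose f x y : R := (\sum_i cnt i x y)%:R.
have Hin : forall x, inflow E f x = (\sum_i count (pred1 x) (W i ++ [:: t]))%:R.
  move=> x; rewrite /inflow /f -natr_sum exchange_big /=; congr (_ %:R).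
  by apply: eq_bigr => i _; rewrite sum_in.
have Hout : forall x, outflow E f x = (\sum_i count (pred1 x) (s :: W i))%:R.
  move=> x; rewrite /outflow /f -natr_sum exchange_big /=; congr (_ %:R).
  by apply: eq_bigr => i _; rewrite sum_out // cats1 belast_rcons.
exists f; split; last first.
  rewrite /flow_size Hout (eq_bigr (fun _ => 1%N)) ?sum1_card ?card_ord //.
  by move=> i _ /=; rewrite eqxx (count_memPn (Hs i)).
split.
  by move=> x y _; rewrite /f ler0n HcD.
move=> x xs xt; rewrite Hin Hout HcV //=.
rewrite (eq_bigr (fun i => count (pred1 x) (W i))); last first.
  by move=> i _; rewrite count_cat /= (eq_sym t x) (negbTE xt); exact: ssrnat.addn0.
split.
  by congr (_ %:R); apply: eq_bigr => i _ /=; rewrite (eq_sym s x) (negbTE xs).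
rewrite lern1.
case: (pickP (fun i => x \in W i)) => [i xi|Hn].
  rewrite (bigD1 i) //= big1 ?addn0.
    by rewrite (count_uniq_mem _ (Hu i)) xi.
  move=> j ji; apply/count_memPn; apply/negP => xj.
  by move: ji; rewrite (Hd _ _ _ xj xi) eqxx.
rewrite big1 // => i _; apply/count_memPn; by rewrite Hn.
Qed.

End Flow.


Section Net.
Variables (m : nat) (D B : rel 'I_m) (v : 'I_m) (A : {set 'I_m}).
Local Open Scope ring_scope.

Definition Eg := gflow_edge D B v A.
Definition internal (x : fnode m) :=
  match x with Lnode _ | Rnode _ => true | _ => false end.
Definition Ei : rel (fnode m) := fun x y => [&& Eg x y, internal x & internal y].
Definition Xs := [set Lnode a | a in A].
Definition Ys := [set Rnode w | w in pa D v].

Lemma Rnode_inj : injective (@Rnode m). Proof. by move=> x y []. Qed.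
Lemma Lnode_inj : injective (@Lnode m). Proof. by move=> x y []. Qed.

Lemma path_int (e : rel (fnode m)) a p : (forall x y, e x y -> internal y) ->
  internal a -> path e a p -> internal (last a p).
Proof.
move=> He; elim: p a => //= b p IH a ia /andP[/He ib]; exact: IH.
Qed.

Lemma path_notin (S : {set fnode m}) (e : rel (fnode m)) a p :
  path (fun x y => e x y && (y \notin S)) a p -> forall u, u \in p -> u \notin S.
Proof.
elim: p a => //= b p IH a /andP[/andP[_ bS] Hp] u; rewrite inE.
by case/orP => [/eqP -> //|]; exact: IH Hp u.
Qed.

Lemma sep_bound (R : realFieldType) f (S : {set fnode m}) :
  is_flow Eg Src Snk (@gflow_cap_node R m) (@gflow_cap_edge R m) f ->
  sepr Ei Xs Ys S -> flow_size Eg Src f <= #|S|%:R.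
Proof.
move=> Hf HS.
pose Er : rel (fnode m) := fun x y => Ei x y && (y \notin S).
pose U := Src |: [set x | [exists a in Xs :\: S, connect Er a x]].
pose S' := [set y in S | internal y].
have reachP : forall x, x \in U -> x != Src -> exists a, exists2 p,
    (a \in Xs) && (a \notin S) & path Er a p /\ x = last a p.
  move=> x; rewrite !inE => /orP[/eqP -> |]; first by rewrite eqxx.
  case/exists_inP => a; rewrite inE => /andP[aS aX] /connectP [p Hp ->] _.
  by exists a, p; rewrite ?aX ?aS.
have Xint : forall a, a \in Xs -> internal a by move=> a /imsetP [? _ ->].
have Erint : forall x y, Er x y -> internal y by move=> x y /andP[/and3P[]].
apply: (le_trans (flow_cut (U := U) (S := S') Hf _ _ _ _ _)).
- by case.
- by rewrite setU11.
- apply/negP => /reachP [] // a [p /andP [aX _] [Hp Hl]].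
  by have := path_int Erint (Xint _ aX) Hp; rewrite -Hl.
- move=> x y xU yU Exy; rewrite inE.
  case Hy: (internal y); last first.
    case: y Hy yU Exy => //; first by case: x xU.
    case: x xU => // w wU _ _ Dw.
    have [] // := reachP _ wU => a [p /andP[aX aS] [Hp Hl]].
    have Hp' : path Ei a p by apply: sub_path Hp => x' y' /andP[].
    have Hl' : last a p \in Ys.
      by rewrite -Hl; apply/imsetP; exists w; rewrite // inE.
    have [u uin uS] := HS a p aX Hp' Hl'.
    move: uin; rewrite inE => /orP[/eqP uE|uin].
      by move: aS; rewrite -uE uS.
    by move: (path_notin Hp uin); rewrite uS.
  rewrite andbT; apply/negPn/negP => yS; move/negP: yU; apply.
  rewrite !inE; apply/orP; right.
  case: x xU Exy => [xU|//|a xU|w xU] Exy.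
  + case: y Hy Exy yS => // a' _ aA yS; apply/exists_inP; exists (Lnode a').
      by rewrite !inE yS; apply/imsetP; exists a'.
    exact: connect0.
  + have [] // := reachP _ xU => a0 [p /andP[aX aS] [Hp Hl]].
    apply/exists_inP; exists a0; first by rewrite !inE aS.
    apply: (connect_trans (y := Lnode a)); first by apply/connectP; exists p.
    by apply: connect1; rewrite /Er /Ei Exy Hy yS.
  + have [] // := reachP _ xU => a0 [p /andP[aX aS] [Hp Hl]].
    apply/exists_inP; exists a0; first by rewrite !inE aS.
    apply: (connect_trans (y := Rnode w)); first by apply/connectP; exists p.
    by apply: connect1; rewrite /Er /Ei Exy Hy yS.
- by move=> y; rewrite inE => /andP[_]; case: y.
- rewrite ler_nat; apply: subset_leq_card; apply/subsetP => y.
  by rewrite inE => /andP[].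
Qed.


Lemma Ei_loopless : (forall x, ~~ D x x) -> forall z, ~~ Ei z z.
Proof. by move=> HD; case => // w; rewrite /Ei /= (negbTE (HD w)). Qed.

Lemma Rwalk w p : path Ei (Rnode w) p -> exists ps, p = map (@Rnode m) ps /\ path D w ps.
Proof.
elim: p w => [|c p IH] w /=; first by exists [::].
case/andP; case: c => [||u|u]; rewrite /Ei /Eg /= ?andbF //.
rewrite andbT => Dwu /IH [ps [-> Hps]].
by exists (u :: ps); rewrite /= Dwu Hps.
Qed.

Lemma ht_rightE (h : halftrek m) : ht_right h =
  [set x in (if h.1.2 then h.2 else h.1.1.1 :: h.2)].
Proof. by case: h => [[[y w] []] p]. Qed.

Lemma decode x p : x \in Xs -> path Ei x p -> last x p \in Ys ->
  exists a, exists h, [/\ x = Lnode a, a \in A, is_half_trek D B h & ht_source h = a] /\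
    [/\ ht_target h \in pa D v, Rnode (ht_target h) \in x :: p &
    forall r, r \in ht_right h -> Rnode r \in p].
Proof.
case/imsetP => a aA ->; case: p => [|c p2] /=.
  by move=> _ /imsetP [].
case/andP; case: c => // w0 /and3P[Ea _ _] /Rwalk [ps [-> Hps]].
rewrite last_map => /imsetP [t tpa /Rnode_inj Ht].
move: Ea; rewrite /Eg /= aA /= => Ea.
have Hlast : Rnode (last w0 ps) \in Lnode a :: Rnode w0 :: map (@Rnode m) ps.
  by rewrite -last_map inE mem_last orbT.
case: (eqVneq w0 a) => [Hw|Hw].
  subst w0; exists a, (a, last a ps, false, ps); split; split => //=.
  - by rewrite Hps eqxx.
  - by rewrite Ht.
  - move=> r; rewrite inE => /orP[/eqP ->|rin]; first by rewrite inE eqxx.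
    by rewrite inE mem_map; [apply/orP; right; exact: rin | exact: Rnode_inj].
move: Ea; rewrite (negbTE Hw) /= => Ea.
exists a, (a, last w0 ps, true, w0 :: ps); split; split => //=.
- by rewrite Ea Hps eqxx.
- by rewrite Ht.
- move=> r; rewrite inE => /orP[/eqP ->|rin]; first by rewrite inE eqxx.
  by rewrite inE mem_map; [apply/orP; right; exact: rin | exact: Rnode_inj].
Qed.

Lemma Dpath_map w ps : path D w ps -> path Eg (Rnode w) (map (@Rnode m) ps).
Proof. by elim: ps w => //= u ps IH w /andP[-> /IH]. Qed.

Lemma encode (h : halftrek m) : is_half_trek D B h -> ht_source h \in A ->
  ht_target h \in pa D v ->
  exists W : seq (fnode m), [/\ path Eg Src (W ++ [:: Snk]), Src \notin W,
    Snk \notin W, uniq W & forall u, u \in W ->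
    u = Lnode (ht_source h) \/ exists2 r, u = Rnode r & r \in ht_right h].
Proof.
case: h => [[[y w] b] p] Hh yA wpa.
rewrite /ht_source /ht_target /= in yA wpa *.
pose rs := if b then p else y :: p.
have [Hpath Hlast] : path Eg (Lnode y) (map (@Rnode m) rs) /\ last (Lnode y) (map (@Rnode m) rs) = Rnode w.
  rewrite /rs; clear rs; case: b Hh.
    case: p => // w0 p' /and3P[Byw Hp /eqP Hl] /=.
    by rewrite yA Byw orbT Dpath_map // last_map Hl.
  case/andP => Hp /eqP Hl /=.
  by rewrite yA eqxx Dpath_map // last_map Hl.
move: Hlast; case: (shortenP Hpath) => p' Hp' Hu Hsub Hl'.
have Hsub' : forall u, u \in p' -> exists2 r, u = Rnode r & r \in rs.
  by move=> u /Hsub /mapP [r rin ->]; exists r.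
exists (Lnode y :: p'); split => //.
- by rewrite /= yA /= cat_path Hp' /= Hl' /= andbT; move: wpa; rewrite inE.
- by rewrite inE /=; apply/negP => /Hsub' [r].
- by rewrite inE /=; apply/negP => /Hsub' [r].
- move=> u; rewrite inE => /orP[/eqP ->|/Hsub' [r -> rin]]; first by left.
  by right; exists r => //; move: rin; rewrite /rs; clear -b; case: b => ? ; rewrite inE.
Qed.

End Net.


Unset Implicit Arguments.
Set Strict Implicit.

Theorem mainTheorem8 (R : realFieldType) (m : nat) (D B : rel 'I_m)
  (hG : mixed_graph D B) (v : 'I_m) (A : {set 'I_m})
  (hA : A \subset ~: (v |: sib B v)) :
  (exists Y : {set 'I_m}, Y \subset A /\ half_trek_criterion D B Y v) <->
  max_flow_size_is (gflow_edge D B v A) Src Snk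
    (@gflow_cap_node R m) (@gflow_cap_edge R m) (#|pa D v|%:R)%R.
Proof.
have cYs : #|Ys D v| = #|pa D v| by rewrite card_imset //; exact: Rnode_inj.
have sepYs : sepr (Ei D B v A) (Xs A) (Ys D v) (Ys D v).
  by move=> a p _ _ Hl; exists (last a p) => //; exact: mem_last.
have upper : forall f, is_flow (gflow_edge D B v A) Src Snk
    (@gflow_cap_node R m) (@gflow_cap_edge R m) f ->
    (flow_size (gflow_edge D B v A) Src f <= #|pa D v|%:R)%R.
  by move=> f Hf; rewrite -cYs; exact: sep_bound Hf sepYs.
split.
  case=> Y [YA [cardY Ycap [k [h [Hht [sinj [simg [tinj [timg [Hl Hr]]]]]]]]]].
  have kpa : #|pa D v| = k by rewrite -timg card_imset // card_ord.
  split => //.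
  have : forall i, exists W : seq (fnode m), [/\ path (Eg D B v A) Src (W ++ [:: Snk]),
      Src \notin W, Snk \notin W, uniq W & forall u, u \in W ->
      u = Lnode (ht_source (h i)) \/ exists2 r, u = Rnode r & r \in ht_right (h i)].
    move=> i; apply: encode (Hht i) _ _.
      by apply: (subsetP YA); rewrite -simg; apply: imset_f.
    by rewrite -timg; apply: imset_f.
  case/fin_all_exists => W HW.
  have [f [Hf Hs]] : exists f, is_flow (gflow_edge D B v A) Src Snk
      (@gflow_cap_node R m) (@gflow_cap_edge R m) f /\
      flow_size (gflow_edge D B v A) Src f = (k%:R)%R.
    apply: (@flow_of_paths R _ (Eg D B v A) Src Snk
      (@gflow_cap_node R m) (@gflow_cap_edge R m) k W).
    all: try by move=> i; case: (HW i).
    - move=> i j u ui uj; have [_ _ _ _ Hi] := HW i; have [_ _ _ _ Hj] := HW j.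
      case: (Hi u ui) => [Eu|[r Eu ri]]; case: (Hj u uj) => [Eu'|[r' Eu' rj]].
      + by apply: sinj; apply: Lnode_inj; rewrite -Eu -Eu'.
      + by rewrite Eu in Eu'.
      + by rewrite Eu in Eu'.
      + move: Eu'; rewrite Eu => /Rnode_inj Er; subst r'.
        apply/eqP/negP => /negP ij; have := Hr i j ij.
        by rewrite -setI_eq0 => /eqP /setP /(_ r); rewrite !inE ri rj.
    - by move=> x; case: x.
    - by [].
  exists f; split => //; by rewrite Hs kpa.
case=> [[f [Hf Hs]] _].
have Hsep : forall S, sepr (Ei D B v A) (Xs A) (Ys D v) S -> #|pa D v| <= #|S|.
  by move=> S HS; rewrite -(ler_nat R) -Hs; exact: sep_bound Hf HS.
case: hG => HD _.
have [P [P1 P2]] := menger (@Ei_loopless m D B v A HD) Hsep.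
set k := #|pa D v| in P P1 P2 Hsep *.
have : forall i, exists ah : 'I_m * halftrek m,
    [/\ (P i).1 = Lnode ah.1, ah.1 \in A, is_half_trek D B ah.2 & ht_source ah.2 = ah.1] /\
    [/\ ht_target ah.2 \in pa D v, Rnode (ht_target ah.2) \in (P i).1 :: (P i).2 &
      forall r, r \in ht_right ah.2 -> Rnode r \in (P i).2].
  move=> i; have [Xi Pi Li] := P1 i.
  have [a [h H]] := decode Xi Pi Li.
  by exists (a, h).
case/fin_all_exists => ah Hah.
pose a i := (ah i).1; pose h i := (ah i).2.
have ainj : injective a.
  move=> i j Hij; have [[Ei _ _ _] _] := Hah i; have [[Ej _ _ _] _] := Hah j.
  apply: (P2 i j (P i).1); first exact: mem_head.
  by rewrite Ei -/(a i) Hij -Ej; exact: mem_head.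
have aA : forall i, a i \in A by move=> i; have [[_ ? _ _] _] := Hah i.
have tinj : injective (fun i => ht_target (h i)).
  move=> i j /= Hij; have [_ [_ Ti _]] := Hah i; have [_ [_ Tj _]] := Hah j.
  by apply: (P2 i j _ Ti); rewrite -/(h i) Hij.
exists [set a i | i in 'I_k]; split.
  by apply/subsetP => z /imsetP [i _ ->].
split.
- by rewrite card_imset // card_ord.
- apply/setP => z; rewrite in_set0; apply/negbTE/negP.
  rewrite inE => /andP[/imsetP[i _ ->] zv].
  by have := subsetP hA _ (aA i); rewrite inE zv.
exists k, h; split; [|split; [|split; [|split; [|split; [|split]]]]].
- by move=> i; have [[_ _ ? _] _] := Hah i.
- move=> i j /= Hij; apply: ainj.
  by have [[_ _ _ Si] _] := Hah i; have [[_ _ _ Sj] _] := Hah j; rewrite /a -Si -Sj.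
- apply: eq_imset => i; by have [[_ _ _ Si] _] := Hah i.
- exact: tinj.
- apply/eqP; rewrite eqEcard card_imset // card_ord leqnn andbT.
  by apply/subsetP => z /imsetP [i _ ->]; have [[_ _ _ _] [? _ _]] := Hah i.
- move=> i j ij; rewrite /ht_left disjoints1 inE.
  apply/eqP => H; move: ij; rewrite (ainj i j) ?eqxx //.
  by have [[_ _ _ Si] _] := Hah i; have [[_ _ _ Sj] _] := Hah j; rewrite /a -Si -Sj.
- move=> i j ij; rewrite -setI_eq0; apply/eqP/setP => r; rewrite !inE.
  apply/negbTE/negP => /andP[ri rj].
  have [_ [_ _ Ri]] := Hah i; have [_ [_ _ Rj]] := Hah j.
  move: ij; rewrite (P2 i j (Rnode r)) ?eqxx //.
    by rewrite inE Ri ?orbT.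
  by rewrite inE Rj ?orbT.
Qed.
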